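(* Let $f:\mathbb{E}\to\mathbb{R}$ be radially lower semicontinuous on some neighborhood of $x\in\mathbb{E}$ and $\ell$-stable at $x$, and suppose $f'_D(x;u)=0$ for all $u\in\mathbb{E}$. Then for every $h\in\mathbb{E}$ the limit \[ \lim_{t\downarrow 0,\,h'\to h}\frac{f(x+th')-f(x+th)}{t^2} \] exists and equals $0$.
   Context: $\mathbb{E}$ is a real finite-dimensional Euclidean space. The lower Dini directional derivative is $f'_D(y;u)=\liminf_{t\downarrow 0}t^{-1}[f(y+tu)-f(y)]$. $f$ is radially lower semicontinuous on a set $U$ iff for every $y\in U$ and direction $v$ the function $s\mapsto f(y+sv)$ is lower semicontinuous on $\{s: y+sv\in U\}$. $f$ is $\ell$-stable at $x$ iff there exist a neighborhood $U$ of $x$ and $K>0$ with $|f'_D(y;u)-f'_D(x;u)|\le K\|y-x\|\,\|u\|$ for all $y\in U$, $u\in\mathbb{E}$. *)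

(* Defs.v *)
From Stdlib Require Fin.
From Stdlib Require Import Reals Lra.
Open Scope R_scope.

(* The finite-dimensional Euclidean space E is modelled as R^n,
   i.e. functions Fin.t n -> R with the standard inner product. *)
Definition E (n : nat) : Type := Fin.t n -> R.

Fixpoint fsum (n : nat) : (Fin.t n -> R) -> R :=
  match n return (Fin.t n -> R) -> R with
  | O => fun _ => 0
  | S m => fun x => x Fin.F1 + fsum m (fun i => x (Fin.FS i))
  end.

Definition vadd {n} (x y : E n) : E n := fun i => x i + y i.
Definition vsub {n} (x y : E n) : E n := fun i => x i - y i.
Definition vscal {n} (t : R) (x : E n) : E n := fun i => t * x i.
Definition vnorm {n} (x : E n) : R := sqrt (fsum n (fun i => x i * x i)).

(* [dini_eq f y u L] : the lower Dini directional derivative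
   f'_D(y;u) = liminf_{t↓0} (f(y+tu)-f(y))/t exists as a finite real and equals L
   (standard unfolding of "liminf = L"). *)
Definition dini_eq {n} (f : E n -> R) (y u : E n) (L : R) : Prop :=
  (forall eps, 0 < eps -> exists delta, 0 < delta /\
     forall t, 0 < t < delta -> L - eps < (f (vadd y (vscal t u)) - f y) / t)
  /\
  (forall eps delta, 0 < eps -> 0 < delta -> exists t, 0 < t < delta /\
     (f (vadd y (vscal t u)) - f y) / t < L + eps).

Definition lsc_on (g : R -> R) (S : R -> Prop) : Prop :=
  forall s0, S s0 -> forall eps, 0 < eps -> exists delta, 0 < delta /\
    forall s, S s -> Rabs (s - s0) < delta -> g s0 - eps < g s.

Definition radially_lsc_on {n} (f : E n -> R) (U : E n -> Prop) : Prop :=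
  forall y v, U y -> lsc_on (fun s => f (vadd y (vscal s v)))
                            (fun s => U (vadd y (vscal s v))).

Definition nbhd {n} (U : E n -> Prop) (x : E n) : Prop :=
  exists r, 0 < r /\ forall y, vnorm (vsub y x) < r -> U y.

Definition l_stable {n} (f : E n -> R) (x : E n) : Prop :=
  exists (U : E n -> Prop) (K : R), nbhd U x /\ 0 < K /\
    forall y u, U y -> exists Ly Lx, dini_eq f y u Ly /\ dini_eq f x u Lx /\
      Rabs (Ly - Lx) <= K * vnorm (vsub y x) * vnorm u.

(* Main.v *)
Require Import Defs.
From Stdlib Require Import Reals Lra FunctionalExtensionality Classical.
Open Scope R_scope.

Lemma fsum_le n : forall a b : Fin.t n -> R, (forall i, a i <= b i) -> fsum n a <= fsum n b.
Proof. induction n; simpl; intros a b H; [lra|]. specialize (IHn (fun i => a (Fin.FS i)) (fun i => b (Fin.FS i))). pose proof (H Fin.F1). assert (fsum n (fun i => a (Fin.FS i)) <= fsum n (fun i => b (Fin.FS i))) by (apply IHn; auto). lra. Qed.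

Lemma fsum_lin n : forall (a b : Fin.t n -> R) (c e : R), fsum n (fun i => c * a i + e * b i) = c * fsum n a + e * fsum n b.
Proof. induction n; simpl; intros a b c e; [ring|]. rewrite (IHn (fun i => a (Fin.FS i)) (fun i => b (Fin.FS i))). ring. Qed.

Lemma fsum_scal n (a : Fin.t n -> R) c : fsum n (fun i => c * a i) = c * fsum n a.
Proof. pose proof (fsum_lin n a a c 0). replace (fun i => c * a i) with (fun i => c * a i + 0 * a i). rewrite H; ring. apply functional_extensionality; intros; ring. Qed.

Lemma fsum_sq_nonneg n (a : Fin.t n -> R) : 0 <= fsum n (fun i => a i * a i).
Proof. replace 0 with (fsum n (fun _ => 0)). apply fsum_le; intros; nra. clear a. induction n; simpl; [auto| rewrite IHn; ring]. Qed.

Lemma vnorm_nonneg n (w : E n) : 0 <= vnorm w.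
Proof. apply sqrt_pos. Qed.

Lemma vnorm_sq n (w : E n) : vnorm w * vnorm w = fsum n (fun i => w i * w i).
Proof. unfold vnorm. apply sqrt_sqrt, fsum_sq_nonneg. Qed.

Lemma vnorm_scal n a (w : E n) : vnorm (vscal a w) = Rabs a * vnorm w.
Proof. unfold vnorm, vscal.
  replace (fun i => a * w i * (a * w i)) with (fun i => (a*a) * (w i * w i)) by (apply functional_extensionality; intros; ring).
  rewrite fsum_scal. rewrite sqrt_mult_alt by nra. f_equal. apply sqrt_Rsqr_abs. Qed.

Lemma vnorm_add_sq n (a b : E n) : vnorm (vadd a b) * vnorm (vadd a b) <= 2 * (vnorm a * vnorm a) + 2 * (vnorm b * vnorm b).
Proof. rewrite !vnorm_sq. unfold vadd. rewrite <- fsum_lin. apply fsum_le; intros i; simpl. pose proof (Rle_0_sqr (a i - b i)). unfold Rsqr in *. nra. Qed.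

Lemma core (psi : R -> R) :
  (forall s0, 0 <= s0 <= 1 -> forall e, 0 < e -> exists d, 0 < d /\
     forall s, 0 <= s <= 1 -> Rabs (s - s0) < d -> psi s0 - e < psi s) ->
  (forall c, 0 < c <= 1 -> forall d, 0 < d -> exists tau, 0 < tau < d /\ psi (c - tau) < psi c) ->
  psi 0 <= psi 1.
Proof.
  intros Hl Hd. apply Rnot_lt_le; intro H1.
  set (al := (psi 0 + psi 1)/2).
  set (S := fun s => 0 <= s <= 1 /\ forall s', 0 <= s' <= s -> psi s' > al).
  assert (HS0 : S 0). { split; [lra|]. intros s' Hs'. replace s' with 0 by lra. unfold al; lra. }
  destruct (completeness S) as [c [Hub Hlub]].
  { exists 1. intros s [Hs _]; lra. } { exists 0; auto. }
  assert (Hc0 : 0 <= c) by (apply Hub; auto).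
  assert (Hc1 : c <= 1) by (apply Hlub; intros s [Hs _]; lra).
  assert (C1 : forall s', 0 <= s' < c -> psi s' > al).
  { intros s' Hs'. destruct (classic (exists e, S e /\ s' < e)) as [[e [[He1 He2] He3]]|Hn].
    - apply He2; lra.
    - exfalso. assert (c <= s'). { apply Hlub. intros e He. apply Rnot_lt_le; intro. apply Hn; eauto. } lra. }
  assert (C2 : psi c <= al).
  { apply Rnot_lt_le; intro Hc.
    destruct (Req_dec c 1) as [E1|E1]. { subst c. unfold al in Hc; lra. }
    destruct (Hl c (conj Hc0 Hc1) (psi c - al)) as [d [Hd0 Hd1]]; [lra|].
    assert (S (Rmin 1 (c + d/2))).
    { split. split; [apply Rmin_glb; lra| apply Rmin_l].
      intros s' Hs'. destruct (Rlt_le_dec s' c). apply C1; lra.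
      assert (s' <= c + d/2) by (pose proof (Rmin_r 1 (c+d/2)); lra).
      pose proof (Rmin_l 1 (c+d/2)).
      specialize (Hd1 s'). assert (psi c - (psi c - al) < psi s'); [|lra].
      apply Hd1; [lra|]. rewrite Rabs_right; lra. }
    pose proof (Hub _ H). unfold Rmin in H0. destruct (Rle_dec 1 (c + d/2)); lra. }
  assert (C3 : 0 < c). { destruct Hc0 as [|E0]; auto. subst c. unfold al in C2; lra. }
  destruct (Hd c (conj C3 Hc1) c C3) as [tau [Ht1 Ht2]].
  specialize (C1 (c - tau)). assert (psi (c-tau) > al) by (apply C1; lra). lra.
Qed.

Lemma mono (phi : R -> R) (M : R) :
  (forall s0, 0 <= s0 <= 1 -> forall e, 0 < e -> exists d, 0 < d /\
     forall s, 0 <= s <= 1 -> Rabs (s - s0) < d -> phi s0 - e < phi s) ->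
  (forall c, 0 < c <= 1 -> forall e, 0 < e -> forall d, 0 < d -> exists tau, 0 < tau < d /\
     (phi (c - tau) - phi c) / tau < M + e) ->
  phi 0 - phi 1 <= M.
Proof.
  intros Hl Hd. apply Rnot_lt_le; intro H.
  set (ep := (phi 0 - phi 1 - M)/2).
  assert (Hep : 0 < ep) by (unfold ep; lra).
  set (psi := fun s => phi s + (M + ep) * s).
  assert (psi 0 <= psi 1).
  { apply core.
    - intros s0 Hs0 e He.
      destruct (Hl s0 Hs0 (e/2)) as [d [Hd0 Hd1]]; [lra|].
      set (A := Rabs (M + ep) + 1).
      assert (HA : 0 < A) by (unfold A; pose proof (Rabs_pos (M+ep)); lra).
      exists (Rmin d (e / (2 * A))). split. apply Rmin_pos; [lra| apply Rdiv_lt_0_compat; lra].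
      intros s Hs Hss. pose proof (Rmin_l d (e/(2*A))). pose proof (Rmin_r d (e/(2*A))).
      specialize (Hd1 s Hs ltac:(lra)). unfold psi.
      assert (Rabs ((M+ep)*(s - s0)) < e/2).
      { rewrite Rabs_mult. apply Rle_lt_trans with (A * Rabs (s - s0)).
        apply Rmult_le_compat_r; [apply Rabs_pos| unfold A; lra].
        apply Rlt_le_trans with (A * (e/(2*A))). apply Rmult_lt_compat_l; lra.
        right; field; lra. }
      pose proof (Rabs_def2 _ _ H2). nra.
    - intros c Hc d Hd0. destruct (Hd c Hc (ep/2) ltac:(lra) d Hd0) as [tau [Ht1 Ht2]].
      exists tau. split; auto. unfold psi.
      assert (phi (c - tau) - phi c = (phi (c - tau) - phi c)/tau * tau) by (field; lra).
      nra. }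
  unfold psi in H0. unfold ep in *. lra.
Qed.

Lemma dini_unique n (f : E n -> R) y u L1 L2 : dini_eq f y u L1 -> dini_eq f y u L2 -> L1 = L2.
Proof.
  assert (Hw : forall A B, dini_eq f y u A -> dini_eq f y u B -> ~ A < B).
  { intros A B [_ HA] [HB _] Hlt.
    destruct (HB ((B - A)/2) ltac:(lra)) as [d [Hd Hd']].
    destruct (HA ((B - A)/2) d ltac:(lra) Hd) as [t [Ht Ht']].
    specialize (Hd' t Ht). lra. }
  intros H1 H2. pose proof (Hw _ _ H1 H2). pose proof (Hw _ _ H2 H1). lra.
Qed.

Theorem lemma4 (n : nat) (f : E n -> R) (x : E n) :
  (exists U : E n -> Prop, nbhd U x /\ radially_lsc_on f U) ->
  l_stable f x ->
  (forall u : E n, dini_eq f x u 0) ->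
  forall h : E n,
    forall eps, 0 < eps -> exists delta, 0 < delta /\
      forall t (h' : E n), 0 < t < delta -> vnorm (vsub h' h) < delta ->
        Rabs ((f (vadd x (vscal t h')) - f (vadd x (vscal t h))) / (t * t)) < eps.
Proof.
  intros [U2 [[r2 [Hr2 HU2]] Hlsc]] [U1 [K [[r1 [Hr1 HU1]] [HK Hstab]]]] H0 h eps Heps.
  set (C := sqrt (2 * (vnorm h * vnorm h) + 2)).
  assert (HC : 0 < C). { apply sqrt_lt_R0. pose proof (vnorm_nonneg n h). nra. }
  assert (HCsq : C * C = 2 * (vnorm h * vnorm h) + 2).
  { apply sqrt_sqrt. pose proof (vnorm_nonneg n h). nra. }
  set (r := Rmin r1 r2).
  assert (Hr : 0 < r) by (apply Rmin_pos; lra).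
  exists (Rmin 1 (Rmin (eps/(2*K*C)) (r/C))).
  split. { apply Rmin_pos; [lra| apply Rmin_pos; apply Rdiv_lt_0_compat; nra]. }
  intros t h' [Ht0 Htd] Hd.
  pose proof (Rmin_l 1 (Rmin (eps/(2*K*C)) (r/C))).
  pose proof (Rmin_r 1 (Rmin (eps/(2*K*C)) (r/C))).
  pose proof (Rmin_l (eps/(2*K*C)) (r/C)).
  pose proof (Rmin_r (eps/(2*K*C)) (r/C)).
  pose proof (Rmin_l r1 r2). pose proof (Rmin_r r1 r2). fold r in H4, H5.
  set (d := vsub h' h) in *.
  set (nd := vnorm d) in *.
  assert (Hnd0 : 0 <= nd) by apply vnorm_nonneg.
  assert (Hnd1 : nd < 1) by lra.
  assert (Hnde : nd < eps/(2*K*C)) by lra.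
  assert (HtC : t * C < r).
  { assert (Htr : t < r / C) by lra. apply Rmult_lt_reg_r with (/C). apply Rinv_0_lt_compat; lra.
    replace (t * C * / C) with t by (field; lra). exact Htr. }
  set (y := vadd x (vscal t h)).
  set (v := vscal t d).
  set (P := fun s => vadd y (vscal s v)).
  assert (F1 : forall s, 0 <= s <= 1 -> vnorm (vsub (P s) x) <= t * C).
  { intros s Hs.
    replace (vsub (P s) x) with (vscal t (vadd h (vscal s d))).
    2:{ apply functional_extensionality; intro i. unfold P, y, v, vsub, vadd, vscal. ring. }
    rewrite vnorm_scal. rewrite Rabs_right by lra.
    apply Rmult_le_compat_l; [lra|].
    pose proof (vnorm_add_sq n h (vscal s d)) as Hq. rewrite vnorm_scal in Hq.
    rewrite Rabs_right in Hq by lra. fold nd in Hq.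
    pose proof (vnorm_nonneg n (vadd h (vscal s d))).
    assert (Hsn : 0 <= s * nd <= 1) by (split; nra).
    assert (s * nd * (s * nd) <= 1) by nra.
    set (N := vnorm (vadd h (vscal s d))) in *.
    destruct (Rle_lt_dec N C) as [|Hlt]; auto.
    assert (C * C < N * N) by (apply Rmult_le_0_lt_compat; lra). lra. }
  assert (F2 : forall s, 0 <= s <= 1 -> U1 (P s) /\ U2 (P s)).
  { intros s Hs. specialize (F1 s Hs). split; [apply HU1| apply HU2]; lra. }
  set (M := K * (t * C) * (t * nd)).
  assert (F3 : forall s w, 0 <= s <= 1 -> vnorm w = t * nd ->
            exists L, dini_eq f (P s) w L /\ Rabs L <= M).
  { intros s w Hs Hw. destruct (F2 s Hs) as [HU _].
    destruct (Hstab (P s) w HU) as [Ly [Lx [HLy [HLx Hb]]]].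
    exists Ly. split; auto.
    rewrite (dini_unique _ _ _ _ _ _ HLx (H0 w)) in Hb.
    rewrite Rminus_0_r in Hb. rewrite Hw in Hb. eapply Rle_trans; [exact Hb|].
    unfold M. apply Rmult_le_compat_r; [nra|]. apply Rmult_le_compat_l; [lra|]. apply F1; auto. }
  assert (Hv : vnorm v = t * nd) by (unfold v; rewrite vnorm_scal, Rabs_right by lra; auto).
  assert (Hmv : vnorm (vscal (-1) v) = t * nd) by (rewrite vnorm_scal, Hv, Rabs_left by lra; ring).
  set (phi := fun s => f (P s)).
  assert (HUy : U2 y).
  { replace y with (P 0). apply (F2 0); lra. apply functional_extensionality; intro i.
    unfold P, vadd, vscal. ring. }
  assert (Hl : forall s0, 0 <= s0 <= 1 -> forall e, 0 < e -> exists dd, 0 < dd /\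
     forall s, 0 <= s <= 1 -> Rabs (s - s0) < dd -> phi s0 - e < phi s).
  { intros s0 Hs0 e He. destruct (Hlsc y v HUy s0 (proj2 (F2 s0 Hs0)) e He) as [dd [Hdd Hdd']].
    exists dd; split; auto. intros s Hs Hss. apply Hdd'; auto. apply (F2 s Hs). }
  assert (B1 : phi 0 - phi 1 <= M).
  { apply mono; auto. intros c Hc e He dd Hdd.
    destruct (F3 c (vscal (-1) v) ltac:(lra) Hmv) as [L [[_ HL] HLM]].
    destruct (HL e dd He Hdd) as [tau [Ht1 Ht2]]. exists tau. split; auto.
    unfold phi. replace (P (c - tau)) with (vadd (P c) (vscal tau (vscal (-1) v))).
    2:{ apply functional_extensionality; intro i. unfold P, vadd, vscal. ring. }
    pose proof (Rle_abs L). unfold phi, P in *. lra. }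
  assert (B2 : phi 1 - phi 0 <= M).
  { pose proof (mono (fun s => phi (1 - s)) M) as Hm. cbv beta in Hm.
    replace (1 - 0) with 1 in Hm by ring. replace (1 - 1) with 0 in Hm by ring. apply Hm.
    - intros s0 Hs0 e He. destruct (Hl (1 - s0) ltac:(lra) e He) as [dd [Hdd Hdd']].
      exists dd; split; auto. intros s Hs Hss. apply Hdd'; [lra|].
      replace (1 - s - (1 - s0)) with (- (s - s0)) by ring. rewrite Rabs_Ropp; auto.
    - intros c Hc e He dd Hdd.
      destruct (F3 (1 - c) v ltac:(lra) Hv) as [L [[_ HL] HLM]].
      destruct (HL e dd He Hdd) as [tau [Ht1 Ht2]]. exists tau. split; auto.
      unfold phi. replace (P (1 - (c - tau))) with (vadd (P (1 - c)) (vscal tau v)).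
      2:{ apply functional_extensionality; intro i. unfold P, vadd, vscal. ring. }
      pose proof (Rle_abs L). unfold phi, P in *. lra. }
  assert (E1 : f (vadd x (vscal t h')) = phi 1).
  { unfold phi. f_equal. apply functional_extensionality; intro i.
    unfold P, y, v, d, vadd, vsub, vscal. ring. }
  assert (E0 : f y = phi 0).
  { unfold phi. f_equal. apply functional_extensionality; intro i.
    unfold P, y, v, vadd, vscal. ring. }
  rewrite E1, E0.
  assert (Habs : Rabs (phi 1 - phi 0) <= M) by (apply Rabs_le; lra).
  assert (Htt : 0 < t * t) by nra.
  unfold Rdiv. rewrite Rabs_mult, Rabs_inv, (Rabs_right (t*t)) by lra.
  apply Rle_lt_trans with (M * / (t * t)).
  { apply Rmult_le_compat_r; [left; apply Rinv_0_lt_compat; lra| auto]. }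
  replace (M * / (t * t)) with (K * C * nd) by (unfold M; field; lra).
  assert (2 * K * C * nd < eps).
  { apply Rmult_lt_reg_r with (/ (2*K*C)). apply Rinv_0_lt_compat; nra.
    replace (2 * K * C * nd * / (2 * K * C)) with nd by (field; lra). exact Hnde. }
  nra.
Qed.
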